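(* Let $h\ge1$ and $c$ be integers with $c>2(h+1)$. Let $G$ be the $h\times2^h$ binary reflected Gray code matrix: for $0\le m<2^h$, column $m$ of $G$ is the binary representation of $m\oplus\lfloor m/2\rfloor$ (bitwise XOR), with row $0$ the most significant bit and row $h-1$ the least significant bit. For $i\in\{0,\dots,c-1\}$ let $G^+(i)$ be the $c\times2^h$ binary matrix (rows indexed $0,\dots,c-1$) whose row $i$ is all ones, whose row $(i+k)\bmod c$ equals row $k-1$ of $G$ for $k=1,\dots,h$, and whose remaining rows are zero. Let $\mathbf{B}=[\,\mathbf{0}\;G^+(c-1)\;G^+(c-2)\;\cdots\;G^+(0)\,]$, a $c\times\ell$ matrix with $\ell=c2^h+1$, where $\mathbf{0}$ is the zero column. Then $\mathbf{B}$ satisfies: (1) the $2\ell$ vectors consisting of the columns of $\mathbf{B}$ and their binary complements are pairwise distinct; (2) the first column of $\mathbf{B}$ is zero; (3) every row of $\sigma(\mathbf{B})-\mathbf{B}$ has exactly $2^{h-1}+1$ entries equal to $-1$, where $\sigma(\mathbf{B})(\cdot,i)=\mathbf{B}(\cdot,(i+1)\bmod\ell)$.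
   Context: Columns of $\mathbf{B}$ are indexed $0,\dots,\ell-1$. The number of $-1$ entries in a row of $\sigma(\mathbf{B})-\mathbf{B}$ is the number of positions $t$ with $\mathbf{B}(r,t)=1$ and $\mathbf{B}(r,(t+1)\bmod\ell)=0$. *)

(* Defs.v *)
From Stdlib Require Import NArith.
From mathcomp Require Import all_boot all_algebra.
Set Implicit Arguments. Unset Strict Implicit. Unset Printing Implicit Defensive.

Definition nxor (a b : nat) : nat := N.to_nat (N.lxor (N.of_nat a) (N.of_nat b)).

Definition bitn (n k : nat) : bool := odd (n %/ 2 ^ k).

Definition gray (h k m : nat) : bool := bitn (nxor m (m %/ 2)) (h.-1 - k).

Definition gplus (h c i r m : nat) : bool :=
  if r == i then true
  else let k := (r + c - i) %% c in
       if (1 <= k <= h) then gray h k.-1 m else false.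

Definition ell (h c : nat) : nat := c * 2 ^ h + 1.

Definition Bmat (h c r j : nat) : bool :=
  if j == 0 then false
  else let p := (j.-1) %/ 2 ^ h in
       let m := (j.-1) %% 2 ^ h in
       gplus h c (c.-1 - p) r m.

Definition colv (h c j : nat) (b : bool) : {ffun 'I_c -> bool} :=
  [ffun r : 'I_c => Bmat h c r j (+) b].

(* Main.v *)
From Stdlib Require Import NArith.
Require Import Defs.
From mathcomp Require Import all_boot all_algebra.
From mathcomp Require Import zify.
Import GRing.Theory.


Section Helpers.
Local Open Scope nat_scope.

Lemma ndiv2_half n : Nat.div2 n = n./2 /\ Nat.div2 n.+1 = uphalf n.
Proof. elim: n => [|n [IH1 IH2]] //=. split; first by []. by rewrite IH1. Qed.

Lemma Nodd_odd n : N.odd (N.of_nat n) = odd n /\ N.even (N.of_nat n) = ~~ odd n.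
Proof.
elim: n => [|n [IH1 IH2]] //; rewrite Nat2N.inj_succ.
by split; [rewrite N.odd_succ IH2 | rewrite N.even_succ IH1 negbK].
Qed.

Lemma testbit_bitn n k : N.testbit (N.of_nat n) (N.of_nat k) = bitn n k.
Proof.
elim: k n => [|k IH] n.
  by rewrite /bitn expn0 divn1 /= N.bit0_odd (proj1 (Nodd_odd n)).
rewrite Nat2N.inj_succ N.testbit_succ_r_div2; last exact: N.le_0_l.
rewrite -Nat2N.inj_div2 IH (proj1 (ndiv2_half n)) /bitn expnS divnMA divn2 //.
Qed.

Lemma bitn_nxor a b k : bitn (nxor a b) k = bitn a k (+) bitn b k.
Proof.
rewrite -!testbit_bitn /nxor N2Nat.id N.lxor_spec.
by case: (N.testbit _ _); case: (N.testbit _ _).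
Qed.

Lemma bitn_half m b : bitn (m %/ 2) b = bitn m b.+1.
Proof. by rewrite /bitn expnS -divnMA. Qed.

Lemma gray_bits h k m : gray h k m = bitn m (h.-1 - k) (+) bitn m (h.-1 - k).+1.
Proof. by rewrite /gray bitn_nxor bitn_half. Qed.

Lemma modc x c : x < 2 * c -> x %% c = if x < c then x else x - c.
Proof.
move=> hx; case: ltnP => hxc; first by rewrite modn_small.
have -> : x = (x - c) + c by lia.
by rewrite modnDr modn_small; lia.
Qed.

Lemma iotaS m k : iota m k.+1 = iota m k ++ [:: m + k].
Proof. by rewrite -addn1 iotaD. Qed.

Definition desc (x : nat -> bool) n := count (fun m => x m && ~~ x m.+1) (iota 0 n).

Lemma desc_div (x z : nat -> bool) d n : 0 < d ->
  (forall m, m <= n * d -> x m = z (m %/ d)) -> desc x (n * d) = desc z n.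
Proof.
case: d => [//|d] _.
have divq : forall q r, r <= d -> (q * d.+1 + r) %/ d.+1 = q.
  by move=> q r hr; rewrite divnMDl // divn_small ?addn0 //; lia.
elim: n => [|n IH] H; first by rewrite mul0n.
have -> : desc z n.+1 = desc z n + (z n && ~~ z n.+1).
  by rewrite /desc -addn1 iotaD count_cat /= add0n addn0 addn1.
rewrite /desc mulSnr iotaD count_cat -/(desc x (n * d.+1)) IH; last first.
  move=> m hm; apply: H; rewrite mulSnr; lia.
congr (_ + _).
rewrite iotaS.
rewrite count_cat /=.
rewrite (@eq_in_count _ _ pred0); last first.
  move=> m; rewrite mem_iota => /andP [h1 h2].
  rewrite !H; try (rewrite mulSnr; lia).
  have -> : m = n * d.+1 + (m - n * d.+1) by lia.
  rewrite divq; last lia.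
  have -> : (n * d.+1 + (m - n * d.+1)).+1 = n * d.+1 + (m - n * d.+1).+1 by lia.
  rewrite divq; last lia.
  by case: (z n).
rewrite count_pred0 !add0n !addn0.
rewrite !H; try (rewrite mulSnr; lia).
rewrite divq //.
have -> : (n * d.+1 + d).+1 = n.+1 * d.+1 by rewrite mulSnr; lia.
by rewrite mulnK.
Qed.

Lemma count_period (P : pred nat) d n : (forall u, P (u + d) = P u) ->
  count P (iota 0 (n * d)) = n * count P (iota 0 d).
Proof.
move=> HP.
have Pn : forall k u, P (k * d + u) = P u.
  elim=> [|k IH] u; first by rewrite mul0n add0n.
  have -> : k.+1 * d + u = (k * d + u) + d by rewrite mulSnr; lia.
  by rewrite HP IH.
elim: n => [|n IH]; first by rewrite !mul0n.
rewrite mulSnr iotaD count_cat IH add0n.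
rewrite -{1}(addn0 (n * d)) iotaDl count_map.
rewrite (@eq_count _ _ P); first by rewrite mulSnr.
by move=> u /=; rewrite Pn.
Qed.


Definition Rk h k m := if k == 0 then true else if (1 <= k <= h) then gray h k.-1 m else false.
Definition Xk h k m := (m < 2 ^ h) && Rk h k m.

Lemma Rk0 h m : Rk h 0 m = true. Proof. by []. Qed.
Lemma Rk_big h k m : h < k -> Rk h k m = false.
Proof. move=> hk; rewrite /Rk; case: eqP => [?|_]; first lia.
by case: ifP => //; lia. Qed.
Lemma Rk_le h k m : Rk h k m -> k <= h.
Proof. by case: (leqP k h) => // hk; rewrite Rk_big. Qed.
Lemma Rk_at0 h k : 0 < k -> Rk h k 0 = false.
Proof.
move=> hk; rewrite /Rk; case: eqP => [?|_]; first lia.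
case: ifP => // _; by rewrite gray_bits /bitn !div0n.
Qed.

Lemma gplus_R h c r p m : r < c -> p < c ->
  gplus h c (c.-1 - p) r m = Rk h ((r + 1 + p) %% c) m.
Proof.
move=> hr hp; rewrite /gplus /Rk.
have -> : r + c - (c.-1 - p) = r + 1 + p by lia.
have -> : (r == c.-1 - p) = ((r + 1 + p) %% c == 0).
  rewrite modc; last lia.
  by case: ltnP => ?; apply/eqP/eqP; lia.
by [].
Qed.

Lemma colval h c r s : r < c -> s < c * 2 ^ h ->
  Bmat h c r s.+1 = Rk h ((r + 1 + s %/ 2 ^ h) %% c) (s %% 2 ^ h).
Proof.
move=> hr hs; rewrite /Bmat /=; apply: gplus_R => //.
by rewrite ltn_divLR ?expn_gt0 // mulnC.
Qed.

Lemma rowsel c q t : q < c -> t < c -> exists2 r, r < c & (r + 1 + q) %% c = t.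
Proof.
move=> hq ht; exists ((t + c - 1 - q) %% c); first by rewrite ltn_pmod //; lia.
rewrite -addnA modnDml.
have -> : t + c - 1 - q + (1 + q) = t + c by lia.
by rewrite modnDr modn_small.
Qed.

Lemma bits_eq h m1 m2 : m1 < 2 ^ h -> m2 < 2 ^ h ->
  (forall b, b < h -> bitn m1 b = bitn m2 b) -> m1 = m2.
Proof.
elim: h m1 m2 => [|h IH] m1 m2.
  by rewrite expn0 !ltnS !leqn0 => /eqP -> /eqP ->.
move=> h1 h2 H.
rewrite (divn_eq m1 2) (divn_eq m2 2) !modn2.
have o : odd m1 = odd m2 by have := H 0 (ltn0Sn _); rewrite /bitn expn0 !divn1.
rewrite o (IH (m1 %/ 2) (m2 %/ 2)) //.
- by rewrite ltn_divLR // -expnSr.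
- by rewrite ltn_divLR // -expnSr.
- by move=> b hb; rewrite !bitn_half; apply: H.
Qed.

Lemma gray_inj h m1 m2 : m1 < 2 ^ h -> m2 < 2 ^ h ->
  (forall k, k < h -> gray h k m1 = gray h k m2) -> m1 = m2.
Proof.
move=> h1 h2 H.
have G : forall b, b < h -> bitn m1 b (+) bitn m1 b.+1 = bitn m2 b (+) bitn m2 b.+1.
  move=> b hb; have := H (h.-1 - b) ltac:(lia); rewrite !gray_bits.
  by have -> : h.-1 - (h.-1 - b) = b by lia.
have top : forall m, m < 2 ^ h -> bitn m h = false.
  by move=> m hm; rewrite /bitn divn_small.
have D : forall i, i <= h -> bitn m1 (h - i) = bitn m2 (h - i).
  elim=> [|i IH] hi; first by rewrite subn0 !top.
  have := G (h - i.+1) ltac:(lia).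
  have -> : (h - i.+1).+1 = h - i by lia.
  rewrite IH; last lia.
  by move/(congr1 (addb^~ (bitn m2 (h - i)))); rewrite !addbK.
apply: bits_eq h1 h2 _ => b hb.
have := D (h - b) ltac:(lia).
by have -> : h - (h - b) = b by lia.
Qed.


Lemma dX0 h : desc (Xk h 0) (2 ^ h) = 1.
Proof.
rewrite -(mul1n (2 ^ h)) (@desc_div _ (fun u => u == 0)) ?expn_gt0 // => m hm.
rewrite /Xk andbT; case: ltnP => hm2; first by rewrite divn_small.
have -> : m = 2 ^ h by lia.
by rewrite divnn expn_gt0.
Qed.

Lemma dX1 h : 1 <= h -> desc (Xk h 1) (2 ^ h) = 1.
Proof.
move=> h1; have e : 2 ^ h = 2 * 2 ^ h.-1 by rewrite -expnS; congr (_ ^ _); lia.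
rewrite e (@desc_div _ (fun u => u == 1)) ?expn_gt0 // => m hm.
rewrite /Xk /Rk /= (_ : 1 <= h) // gray_bits subn0.
have -> : h.-1.+1 = h by lia.
case: ltnP => hm2 /=.
  rewrite /bitn (divn_small (m := m) (d := 2 ^ h)) // addbF.
  have : m %/ 2 ^ h.-1 < 2 by rewrite ltn_divLR ?expn_gt0 //; lia.
  by case: (m %/ _) => [|[|]].
have -> : m = 2 * 2 ^ h.-1 by lia.
by rewrite mulnK ?expn_gt0.
Qed.

Lemma dXk h k : 2 <= k <= h -> desc (Xk h k) (2 ^ h) = 2 ^ (k - 2).
Proof.
move=> /andP [k2 kh].
set b := h - k.
have e : 2 ^ h = 2 ^ k * 2 ^ b by rewrite -expnD; congr (_ ^ _); lia.
pose z u := odd u (+) odd (u %/ 2).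
rewrite e (@desc_div _ z) ?expn_gt0 //; last first.
  move=> m hm; rewrite /Xk /Rk.
  have -> : (k == 0) = false by apply/eqP; lia.
  have -> : (1 <= k <= h) = true by apply/andP; split; lia.
  rewrite gray_bits.
  have -> : h.-1 - k.-1 = b by rewrite /b; lia.
  case: ltnP => hm2 /=.
    by rewrite /z /bitn expnSr divnMA.
  have -> : m = 2 ^ k * 2 ^ b by lia.
  rewrite mulnK ?expn_gt0 // /z oddX.
  have -> : 2 ^ k = 2 ^ k.-1 * 2 by rewrite -expnSr; congr (_ ^ _); lia.
  rewrite mulnK // oddX.
  have -> : (k == 0) = false by apply/eqP; lia.
  by have -> : (k.-1 == 0) = false by apply/eqP; lia.
have e4 : 2 ^ k = 2 ^ (k - 2) * 4 by rewrite -(expnD 2 _ 2); congr (_ ^ _); lia.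
rewrite /desc e4 count_period; first by rewrite muln1.
have zp : forall u, z (u + 4) = z u.
  move=> u; rewrite /z oddD /= addbF.
  by rewrite (_ : u + 4 = 2 * 2 + u) ?divnMDl //= ?oddD ?addbF //; lia.
move=> u /=; rewrite zp.
by rewrite (_ : (u + 4).+1 = u.+1 + 4) ?zp //; lia.
Qed.

Lemma dXbig h k : h < k -> desc (Xk h k) (2 ^ h) = 0.
Proof.
move=> hk; rewrite /desc (@eq_count _ _ pred0) ?count_pred0 //.
by move=> m; rewrite /Xk !Rk_big ?andbF.
Qed.

Lemma sumS h n : n + 2 <= h + 1 ->
  \sum_(0 <= k < n + 2) desc (Xk h k) (2 ^ h) = 2 ^ n + 1.
Proof.
elim: n => [|n IH] hn.
  rewrite add0n big_nat_recr //= big_nat_recr //= big_geq // add0n.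
  by rewrite dX0 dX1 //; lia.
rewrite (_ : n.+1 + 2 = (n + 2).+1) // big_nat_recr /=; last lia.
rewrite IH; last lia.
rewrite dXk; last lia.
rewrite (_ : n + 2 - 2 = n); last lia.
rewrite expnS; lia.
Qed.

Lemma sum_all h c : 1 <= h -> h + 1 <= c ->
  \sum_(0 <= k < c) desc (Xk h k) (2 ^ h) = 2 ^ (h - 1) + 1.
Proof.
move=> h1 hc.
rewrite (@big_cat_nat _ _ _ (h + 1)) //=.
rewrite (_ : h + 1 = h - 1 + 2); last lia.
rewrite sumS; last lia.
rewrite big_nat_cond big1 ?addn0 // => k /andP [/andP [hk _] _].
by rewrite dXbig //; lia.
Qed.

Lemma rot1 c (G : nat -> nat) : 0 < c ->
  \sum_(0 <= p < c) G ((p + 1) %% c) = \sum_(0 <= p < c) G p.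
Proof.
case: c => [//|c] _.
rewrite big_nat_recr //= big_nat_recl //=.
rewrite (_ : (c + 1) %% c.+1 = 0); last by rewrite addn1 modnn.
rewrite addnC; congr (_ + _).
apply: eq_big_nat => p /andP [_ hp].
by rewrite modn_small ?addn1 //; lia.
Qed.

Lemma rot_sum c a (F : nat -> nat) : 0 < c ->
  \sum_(0 <= p < c) F ((a + p) %% c) = \sum_(0 <= p < c) F p.
Proof.
move=> c0; elim: a => [|a IH].
  by apply: eq_big_nat => p /andP [_ hp]; rewrite add0n modn_small.
rewrite -IH -(@rot1 c (fun q => F ((a + q) %% c))) //.
apply: eq_big_nat => p _.
by rewrite modnDmr addnA addn1 addSn.
Qed.

Lemma count_blocks (P : pred nat) c N :
  count P (iota 0 (c * N)) = \sum_(0 <= p < c) count P (iota (p * N) N).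
Proof.
elim: c => [|c IH]; first by rewrite mul0n big_geq.
by rewrite mulSnr iotaD count_cat IH big_nat_recr.
Qed.


Lemma block h c r p : r < c -> p < c -> 2 * (h + 1) < c ->
  count (fun s => ((s < c * 2 ^ h) && Bmat h c r s.+1) &&
                  ~~ ((s.+1 < c * 2 ^ h) && Bmat h c r s.+2))
        (iota (p * 2 ^ h) (2 ^ h))
  = desc (Xk h ((r + 1 + p) %% c)) (2 ^ h).
Proof.
move=> hr hp hc.
set N := 2 ^ h; have N0 : 0 < N by rewrite expn_gt0.
set k := (r + 1 + p) %% c.
have hpN : p.+1 * N <= c * N by rewrite leq_mul2r hp orbT.
have Yv : forall m, m < N -> (p * N + m < c * N) && Bmat h c r (p * N + m).+1 = Xk h k m.
  move=> m hm.
  have -> : p * N + m < c * N by rewrite mulSnr in hpN; lia.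
  rewrite /= colval //; last by rewrite mulSnr in hpN; lia.
  rewrite divnMDl // divn_small // addn0 modnMDl (modn_small hm).
  by rewrite /Xk hm.
rewrite -{1}(addn0 (p * N)) iotaDl count_map /desc.
apply: eq_in_count => m; rewrite mem_iota add0n => hm /=.
rewrite Yv //.
case: (ltnP m.+1 N) => hm1.
  by rewrite -addnS Yv.
have -> : Xk h k m.+1 = false by rewrite /Xk (_ : m.+1 < 2 ^ h = false) //; rewrite /N in hm1; lia.
case E: (Xk h k m) => //=.
have kh : k <= h by move: E => /andP [_ /Rk_le].
have -> : (p * N + m).+2 = (p.+1 * N).+1 by rewrite mulSnr; lia.
case: (ltnP (p.+1 * N) (c * N)) => //= hlt.
rewrite colval // mulnK // modnMl Rk_at0 //.
rewrite (_ : r + 1 + p.+1 = (r + 1 + p) + 1); last lia.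
rewrite -modnDml -/k modn_small; lia.
Qed.

Lemma part3 h c r : 1 <= h -> 2 * (h + 1) < c -> r < c ->
  count (fun t => Bmat h c r t && ~~ Bmat h c r ((t + 1) %% ell h c)) (iota 0 (ell h c))
  = 2 ^ (h - 1) + 1.
Proof.
move=> h1 hc hr.
rewrite /ell addn1 /= add0n.
have -> : iota 1 (c * 2 ^ h) = [seq 1 + i | i <- iota 0 (c * 2 ^ h)] by rewrite -iotaDl.
rewrite count_map.
rewrite (@eq_in_count _ _ (fun s => ((s < c * 2 ^ h) && Bmat h c r s.+1) &&
                  ~~ ((s.+1 < c * 2 ^ h) && Bmat h c r s.+2))); last first.
  move=> s; rewrite mem_iota add0n => /andP [_ hs] /=.
  rewrite add1n hs /=.
  case: (ltnP s.+1 (c * 2 ^ h)) => h2 /=.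
    by rewrite modn_small ?addn1 //; lia.
  have -> : s.+1 + 1 = (c * 2 ^ h).+1 by lia.
  by rewrite modnn /Bmat.
rewrite count_blocks -(@sum_all h c) //; last lia.
rewrite -(@rot_sum c (r + 1) (fun k => desc (Xk h k) (2 ^ h))); last lia.
apply: eq_big_nat => p /andP [_ hp].
exact: block.
Qed.


Lemma modc3 x c : x < 2 * c -> exists k, x %% c = k /\ (x = k \/ x = k + c) /\ k < c.
Proof.
move=> hx; exists (x %% c); split => //; rewrite modc //.
by case: ltnP => ?; split; lia.
Qed.

Lemma Bmat0 h c r : Bmat h c r 0 = false. Proof. by []. Qed.

Lemma same_cols h c j1 j2 : 1 <= h -> 2 * (h + 1) < c -> j1 < ell h c -> j2 < ell h c ->
  (forall r, r < c -> Bmat h c r j1 = Bmat h c r j2) -> j1 = j2.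
Proof.
move=> h1 hc; rewrite /ell.
have c0 : 0 < c by lia.
have hc1 : h + 1 < c by lia.
have lt2 : forall a b, a < c -> b < c -> a + 1 + b < 2 * c by move=> a b; lia.
have kc : forall k, k < h -> k.+1 < c by move=> k; lia.
have N0 : 0 < 2 ^ h by rewrite expn_gt0.
have qlt : forall s, s < c * 2 ^ h -> s %/ 2 ^ h < c.
  by move=> s hs; rewrite ltn_divLR // mulnC.
case: j1 => [|s1]; case: j2 => [|s2] // hj1 hj2 E.
- have hs2 : s2 < c * 2 ^ h by lia.
  have [r hr hk] := rowsel _ _ _ (qlt _ hs2) c0.
  by have := E r hr; rewrite Bmat0 colval // hk.
- have hs1 : s1 < c * 2 ^ h by lia.
  have [r hr hk] := rowsel _ _ _ (qlt _ hs1) c0.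
  by have := E r hr; rewrite Bmat0 colval // hk.
have hs1 : s1 < c * 2 ^ h by lia.
have hs2 : s2 < c * 2 ^ h by lia.
have hq1 := qlt _ hs1; have hq2 := qlt _ hs2.
set q1 := s1 %/ 2 ^ h in hq1; set q2 := s2 %/ 2 ^ h in hq2.
have eq1 : s1 %/ 2 ^ h = q1 by []. have eq2 : s2 %/ 2 ^ h = q2 by []. clearbody q1 q2.
have hq12 : q1 = q2.
  have [r1 hr1 hk1] := rowsel _ _ _ hq1 c0.
  have [r2 hr2 hk2] := rowsel _ _ _ hq2 c0.
  have A1 := E r1 hr1; have A2 := E r2 hr2.
  rewrite !colval // eq1 eq2 hk1 in A1.
  rewrite !colval // eq1 eq2 hk2 in A2.
  have B1 := Rk_le _ _ _ (esym A1); have B2 := Rk_le _ _ _ A2.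
  have [k1 [ek1 [x1 _]]] := modc3 _ _ (lt2 _ _ hr1 hq1).
  have [k2 [ek2 [x2 _]]] := modc3 _ _ (lt2 _ _ hr2 hq2).
  have [k3 [ek3 [x3 c3]]] := modc3 _ _ (lt2 _ _ hr1 hq2).
  have [k4 [ek4 [x4 c4]]] := modc3 _ _ (lt2 _ _ hr2 hq1).
  rewrite ek3 in B1; rewrite ek4 in B2; rewrite ek1 in hk1; rewrite ek2 in hk2.
  clear -x1 x2 x3 x4 B1 B2 hk1 hk2 c3 c4 hc hr1 hr2 hq1 hq2. lia.
have em : s1 %% 2 ^ h = s2 %% 2 ^ h.
  apply: (@gray_inj h); rewrite ?ltn_pmod // => k hk.
  have [r hr ht] := rowsel _ _ _ hq1 (kc _ hk).
  have := E r hr; rewrite !colval // eq1 eq2 -hq12 ht /Rk /=.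
  by rewrite (_ : k < h) //.
by rewrite (divn_eq s1 (2 ^ h)) (divn_eq s2 (2 ^ h)) eq1 eq2 hq12 em.
Qed.

Lemma compl_cols h c j1 j2 : 1 <= h -> 2 * (h + 1) < c -> j1 < ell h c -> j2 < ell h c ->
  ~ (forall r, r < c -> Bmat h c r j1 = ~~ Bmat h c r j2).
Proof.
move=> h1 hc; rewrite /ell.
have c0 : 0 < c by lia.
have hc1 : h + 1 < c by lia.
have lt2 : forall a b, a < c -> b < c -> a + 1 + b < 2 * c by move=> a b; lia.
have kc : forall k, k < h -> k.+1 < c by move=> k; lia.
have N0 : 0 < 2 ^ h by rewrite expn_gt0.
have qlt : forall s, s < c * 2 ^ h -> s %/ 2 ^ h < c.
  by move=> s hs; rewrite ltn_divLR // mulnC.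
case: j1 => [|s1]; case: j2 => [|s2] hj1 hj2 E.
- by have := E 0 c0.
- have hs2 : s2 < c * 2 ^ h by lia.
  have [r hr hk] := rowsel _ _ _ (qlt _ hs2) hc1.
  by have := E r hr; rewrite Bmat0 colval // hk Rk_big // addn1.
- have hs1 : s1 < c * 2 ^ h by lia.
  have [r hr hk] := rowsel _ _ _ (qlt _ hs1) hc1.
  by have := E r hr; rewrite Bmat0 colval // hk Rk_big // addn1.
have hs1 : s1 < c * 2 ^ h by lia.
have hs2 : s2 < c * 2 ^ h by lia.
have hq1 := qlt _ hs1; have hq2 := qlt _ hs2.
set q1 := s1 %/ 2 ^ h in hq1; set q2 := s2 %/ 2 ^ h in hq2.
have eq1 : s1 %/ 2 ^ h = q1 by []. have eq2 : s2 %/ 2 ^ h = q2 by []. clearbody q1 q2.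
have fin : forall t, h < t < c -> 
   (forall r k, r < c -> (r + 1 + q1 = t \/ r + 1 + q1 = t + c) ->
        (r + 1 + q2 = k \/ r + 1 + q2 = k + c) -> k < c -> h < k) -> False.
  move=> t /andP [ht1 ht2] H.
  have [r hr ht] := rowsel _ _ _ hq1 ht2.
  have [k1 [ek1 [x1 _]]] := modc3 _ _ (lt2 _ _ hr hq1).
  have [k2 [ek2 [x2 c2]]] := modc3 _ _ (lt2 _ _ hr hq2).
  have hk2 : h < k2 by apply: (H r) => //; rewrite -ht ek1.
  have := E r hr; rewrite !colval // eq1 eq2 ht ek2 !Rk_big //.
case: (leqP q1 q2) => hq.
  case: (leqP (q2 - q1) (c - h - 2)) => hd.
    by apply: (fin (h + 1)); [lia | move=> r k; clear -hq hd hq1 hq2 hc; lia].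
  by apply: (fin (c - 1)); [lia | move=> r k; clear -hq hd hq1 hq2 hc; lia].
case: (leqP (c - (q1 - q2)) (c - h - 2)) => hd.
  by apply: (fin (h + 1)); [lia | move=> r k; clear -hq hd hq1 hq2 hc; lia].
by apply: (fin (c - 1)); [lia | move=> r k; clear -hq hd hq1 hq2 hc; lia].
Qed.

End Helpers.

Local Open Scope ring_scope.

Theorem mainTheorem6 (h c : nat) (hh : (1 <= h)%N) (hc : (2 * (h + 1) < c)%N) :
  (* (1) the 2*ell columns and their complements are pairwise distinct *)
  (forall (j1 j2 : nat) (b1 b2 : bool), (j1 < ell h c)%N -> (j2 < ell h c)%N ->
      colv h c j1 b1 = colv h c j2 b2 -> j1 = j2 /\ b1 = b2)
  (* (2) the first column is zero *)
  /\ (forall r : nat, (r < c)%N -> Bmat h c r 0 = false)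
  (* (3) each row of sigma(B) - B has exactly 2^(h-1)+1 entries equal to -1 *)
  /\ (forall r : nat, (r < c)%N ->
      count (fun t : nat =>
               ((Bmat h c r ((t + 1) %% ell h c))%:R - (Bmat h c r t)%:R : int) == -1)
            (iota 0 (ell h c))
      = (2 ^ (h - 1) + 1)%N).
Proof.
split; [|split].
- move=> j1 j2 b1 b2 hj1 hj2 /ffunP E'.
  have E : forall r, (r < c)%N -> Bmat h c r j1 (+) b1 = Bmat h c r j2 (+) b2.
    by move=> r hr; have := E' (Ordinal hr); rewrite !ffunE.
  clear E'; case: b1 b2 E => [] [] E.
  + split => //; apply: (@same_cols h c j1 j2 hh hc hj1 hj2) => r hr.
    by have := E r hr; rewrite !addbT => /negb_inj.
  + exfalso; apply: (@compl_cols h c j2 j1 hh hc hj2 hj1) => r hr.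
    by have := E r hr; rewrite addbT addbF => <-.
  + exfalso; apply: (@compl_cols h c j1 j2 hh hc hj1 hj2) => r hr.
    by have := E r hr; rewrite addbT addbF => ->.
  + split => //; apply: (@same_cols h c j1 j2 hh hc hj1 hj2) => r hr.
    by have := E r hr; rewrite !addbF.
- by move=> r _.
- move=> r hr; rewrite -(@part3 h c r hh hc hr); apply: eq_count => t.
  by case: (Bmat h c r t); case: (Bmat h c r _).
Qed.
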